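(* Let $(\mathcal E,B,\mathcal L_{\mathcal P})$ be an epistemic space with $|\mathcal P|\ge2$. Any ES basic fusion operator that satisfies (ESF-SD), (ESF7), (ESF8W) and (ESF-I) also satisfies (ESF-D).
   Context: $[\![\phi]\!]$ denotes models; $\varphi_M$ a formula with models exactly $M$. Epistemic space: $\mathcal E$ nonempty, $B:\mathcal E\to\mathcal L_{\mathcal P}$ (propositional formulas over finite $\mathcal P$) with image modulo equivalence exactly the consistent formulas. Agents: well-ordered set $\mathcal S$; society: nonempty finite $N\subseteq\mathcal S$; $N$-profile $\Phi:N\to\mathcal E$, $E_i=\Phi(i)$, identified with $E_i$ if $N=\{i\}$; profiles on $\{i_1<\dots<i_n\}$, $\{j_1<\dots<j_m\}$ equivalent if $n=m$ and entries coincide position-wise; $\Phi\upharpoonright_M$ restriction; partition $\{N_1,N_2\}$: nonempty disjoint parts with union $N$. ES basic fusion operator: a map $\nabla(\Phi,E)\in\mathcal E$ with (ESF1) $B(\nabla(\Phi,E))\vdash B(E)$; (ESF2) equivalent profiles and $B(E)\equiv B(E')$ give equivalent $B(\nabla)$; (ESF3) if $B(E)\equiv B(E')\wedge B(E'')$ then $B(\nabla(\Phi,E'))\wedge B(E'')\vdash B(\nabla(\Phi,E))$; (ESF4) if moreover $B(\nabla(\Phi,E'))\wedge B(E'')\nvdash\bot$ then $B(\nabla(\Phi,E))\vdash B(\nabla(\Phi,E'))\wedge B(E'')$. (ESF7) $B(\nabla(\Phi\upharpoonright_{N_1},E))\wedge B(\nabla(\Phi\upharpoonright_{N_2},E))\vdash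 B(\nabla(\Phi,E))$; (ESF8W) if that conjunction is consistent then $B(\nabla(\Phi,E))\vdash B(\nabla(\Phi\upharpoonright_{N_1},E))\vee B(\nabla(\Phi\upharpoonright_{N_2},E))$. (ESF-SD): for every agent $i$, interpretations $w,w',w''$ and $E_{w,w'},E_{w',w''}$ with $[\![B(E_{w,w'})]\!]=\{w,w'\}$, $[\![B(E_{w',w''})]\!]=\{w',w''\}$, there exist $i$-profiles realising each of: (i) $B(\nabla(E_i,E_{w,w'}))\equiv\varphi_{w,w'}$ and $B(\nabla(E_i,E_{w',w''}))\equiv\varphi_{w',w''}$; (ii) $\equiv\varphi_{w,w'}$ and $\equiv\varphi_{w'}$; (iii) $\equiv\varphi_w$ and $\equiv\varphi_{w',w''}$; (iv) $\equiv\varphi_w$ and $\equiv\varphi_{w'}$. (ESF-I): for every $N$, $N$-profiles $\Phi,\Phi'$, $E$: if for every $E'$ with $B(E')\vdash B(E)$, $B(\nabla(E_j,E'))\equiv B(\nabla(E'_j,E'))$ for all $j\in N$, then $B(\nabla(\Phi,E))\equiv B(\nabla(\Phi',E))$. (ESF-D): for every society $N$ there exists $d_N\in N$ such that for every $N$-profile $\Phi$ and every $E$, $B(\nabla(\Phi,E))\vdash B(\nabla(E_{d_N},E))$. *)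

(* Defs.v *)
From HB Require Import structures.
From mathcomp Require Import all_boot all_order.
From Stdlib Require List.
Set Implicit Arguments. Unset Strict Implicit. Unset Printing Implicit Defensive.
Import Order.TTheory.

Inductive form (P : Type) : Type :=
  | FVar : P -> form P
  | FTop : form P
  | FBot : form P
  | FNeg : form P -> form P
  | FAnd : form P -> form P -> form P
  | FOr  : form P -> form P -> form P
  | FImp : form P -> form P -> form P.
Arguments FTop {P}. Arguments FBot {P}.

Definition interp (P : finType) := {ffun P -> bool}.

Fixpoint eval (P : finType) (v : interp P) (f : form P) : bool :=
  match f with
  | FVar p => v p
  | FTop => true
  | FBot => false
  | FNeg g => ~~ eval v g
  | FAnd g h => eval v g && eval v h
  | FOr g h => eval v g || eval v h
  | FImp g h => eval v g ==> eval v h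
  end.

Definition ent (P : finType) (phi psi : form P) : Prop :=
  forall v : interp P, eval v phi -> eval v psi.
Definition fequiv (P : finType) (phi psi : form P) : Prop :=
  ent phi psi /\ ent psi phi.
Definition consistent (P : finType) (phi : form P) : Prop :=
  exists v : interp P, eval v phi.
Definition models_are (P : finType) (phi : form P) (M : {set interp P}) : Prop :=
  forall v : interp P, eval v phi = (v \in M).

Definition epistemic_space (P : finType) (E : Type) (B : E -> form P) : Prop :=
  [/\ inhabited E,
      (forall e, consistent (B e)) &
      (forall phi : form P, consistent phi -> exists e, fequiv (B e) phi)].

(** A profile Phi : N -> E on a society N (nonempty finite subset of S) is
    represented as the list of pairs (i, E_i), i in N, sorted strictly
    increasingly by agent. *)
Section Profiles.
Context {d : Order.disp_t} {S : orderType d} {E : Type}.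

Definition profile := seq (S * E)%type.

Definition society (Phi : profile) : seq S := map fst Phi.

Definition valid_profile (Phi : profile) : Prop :=
  Phi <> [::] /\ sorted (fun p q : S * E => (p.1 < q.1)%O) Phi.

Definition valid_society (N : seq S) : Prop :=
  N <> [::] /\ sorted (fun x y : S => (x < y)%O) N.

(** equivalent profiles: same size, same entries position-wise
    (positions w.r.t. the order of agents) *)
Definition equiv_profiles (Phi Phi' : profile) : Prop :=
  map snd Phi = map snd Phi'.

Definition restr (Phi : profile) (M : seq S) : profile :=
  filter (fun p => p.1 \in M) Phi.

Definition partition2 (N N1 N2 : seq S) : Prop :=
  [/\ N1 <> [::], N2 <> [::],
      (forall x, x \in N1 -> x \notin N2) &
      (forall x, (x \in N) = (x \in N1) || (x \in N2))].

Definition single (i : S) (e : E) : profile := [:: (i, e)].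

End Profiles.

Section Postulates.
Context {P : finType} {d : Order.disp_t} {S : orderType d} {E : Type}.
Variables (B : E -> form P) (nabla : @profile d S E -> E -> E).

Definition ESF1 : Prop := forall Phi e, valid_profile Phi ->
  ent (B (nabla Phi e)) (B e).

Definition ESF2 : Prop := forall Phi Phi' e e',
  valid_profile Phi -> valid_profile Phi' -> equiv_profiles Phi Phi' ->
  fequiv (B e) (B e') -> fequiv (B (nabla Phi e)) (B (nabla Phi' e')).

Definition ESF3 : Prop := forall Phi e e' e'', valid_profile Phi ->
  fequiv (B e) (FAnd (B e') (B e'')) ->
  ent (FAnd (B (nabla Phi e')) (B e'')) (B (nabla Phi e)).

Definition ESF4 : Prop := forall Phi e e' e'', valid_profile Phi ->
  fequiv (B e) (FAnd (B e') (B e'')) ->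
  consistent (FAnd (B (nabla Phi e')) (B e'')) ->
  ent (B (nabla Phi e)) (FAnd (B (nabla Phi e')) (B e'')).

Definition basic_fusion : Prop := [/\ ESF1, ESF2, ESF3 & ESF4].

Definition ESF7 : Prop := forall Phi N1 N2 e, valid_profile Phi ->
  partition2 (society Phi) N1 N2 ->
  ent (FAnd (B (nabla (restr Phi N1) e)) (B (nabla (restr Phi N2) e)))
      (B (nabla Phi e)).

Definition ESF8W : Prop := forall Phi N1 N2 e, valid_profile Phi ->
  partition2 (society Phi) N1 N2 ->
  consistent (FAnd (B (nabla (restr Phi N1) e)) (B (nabla (restr Phi N2) e))) ->
  ent (B (nabla Phi e))
      (FOr (B (nabla (restr Phi N1) e)) (B (nabla (restr Phi N2) e))).

Definition ESF_SD : Prop :=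
  forall (i : S) (w w' w'' : interp P) (e1 e2 : E),
  w != w' -> w' != w'' -> w != w'' ->
  models_are (B e1) [set w; w'] -> models_are (B e2) [set w'; w''] ->
  [/\ exists ei, models_are (B (nabla (single i ei) e1)) [set w; w'] /\
                 models_are (B (nabla (single i ei) e2)) [set w'; w''],
      exists ei, models_are (B (nabla (single i ei) e1)) [set w; w'] /\
                 models_are (B (nabla (single i ei) e2)) [set w'],
      exists ei, models_are (B (nabla (single i ei) e1)) [set w] /\
                 models_are (B (nabla (single i ei) e2)) [set w'; w''] &
      exists ei, models_are (B (nabla (single i ei) e1)) [set w] /\
                 models_are (B (nabla (single i ei) e2)) [set w'] ].

Definition ESF_I : Prop :=
  forall (Phi Phi' : profile) (e : E),
  valid_profile Phi -> valid_profile Phi' -> society Phi = society Phi' ->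
  (forall e' : E, ent (B e') (B e) ->
     forall (j : S) (ej ej' : E), List.In (j, ej) Phi -> List.In (j, ej') Phi' ->
       fequiv (B (nabla (single j ej) e')) (B (nabla (single j ej') e'))) ->
  fequiv (B (nabla Phi e)) (B (nabla Phi' e)).

Definition ESF_D : Prop :=
  forall N : seq S, valid_society N ->
  exists2 dN : S, dN \in N &
    forall (Phi : profile) (e : E), valid_profile Phi -> society Phi = N ->
    forall edN : E, List.In (dN, edN) Phi ->
      ent (B (nabla Phi e)) (B (nabla (single dN edN) e)).

End Postulates.

(* Main.v *)
Require Import Defs.
From HB Require Import structures.
From mathcomp Require Import all_boot all_order.
From Stdlib Require Import IndefiniteDescription.
From Stdlib Require List.
Set Implicit Arguments. Unset Strict Implicit. Unset Printing Implicit Defensive.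
Import Order.TTheory.

Section Forms.
Variable P : finType.
Definition ms (f : form P) : {set interp P} := [set v | eval v f].
Lemma ms_models f M : models_are f M <-> ms f = M.
Proof.
split=> [H|<- v]; last by rewrite inE.
by apply/setP=> v; rewrite inE H.
Qed.
Lemma ms_ent f g : ent f g <-> ms f \subset ms g.
Proof.
split=> [H|/subsetP H v Hv].
  by apply/subsetP=> v; rewrite !inE; apply: H.
by have := H v; rewrite !inE; apply.
Qed.
Lemma ms_fequiv f g : fequiv f g <-> ms f = ms g.
Proof.
rewrite /fequiv !ms_ent; split=> [[H1 H2]|->]; last by [].
by apply/eqP; rewrite eqEsubset H1 H2.
Qed.
Lemma ms_cons f : consistent f <-> ms f != set0.
Proof.
split=> [[v Hv]|/set0Pn [v]]; last by rewrite inE; exists v.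
by apply/set0Pn; exists v; rewrite inE.
Qed.
Lemma ms_and f g : ms (FAnd f g) = ms f :&: ms g.
Proof. by apply/setP=> v; rewrite !inE. Qed.
Lemma ms_or f g : ms (FOr f g) = ms f :|: ms g.
Proof. by apply/setP=> v; rewrite !inE. Qed.
Definition fpt (v : interp P) : form P :=
  foldr (fun p acc => FAnd (if v p then FVar p else FNeg (FVar p)) acc) FTop (enum P).
Lemma eval_fpt u v : eval u (fpt v) = (u == v).
Proof.
rewrite /fpt.
have -> : forall s, eval u (foldr (fun p acc => FAnd (if v p then FVar p else FNeg (FVar p)) acc) FTop s) = all (fun p => u p == v p) s.
  by elim=> //= p s ->; case: (v p) => /=; case: (u p).
apply/allP/eqP => [H|->]; last by move=> p _; rewrite eqxx.
by apply/ffunP => p; apply/eqP; apply: H; rewrite mem_enum.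
Qed.
Definition fchi (M : {set interp P}) : form P :=
  foldr (fun v acc => FOr (fpt v) acc) FBot (enum M).
Lemma ms_fchi M : ms (fchi M) = M.
Proof.
apply/setP=> u; rewrite inE /fchi.
have -> : forall s, eval u (foldr (fun v acc => FOr (fpt v) acc) FBot s) = (u \in s).
  by elim=> //= v s ->; rewrite eval_fpt inE.
by rewrite mem_enum.
Qed.
End Forms.

Lemma all_In (A : Type) (a : pred A) s x : all a s -> List.In x s -> a x.
Proof. elim: s => //= y s IH /andP[ay al] [<-|]; [done|exact: IH]. Qed.

Lemma filter_none (T : Type) (a : pred T) s :
  (forall x, List.In x s -> ~~ a x) -> filter a s = [::].
Proof.
elim: s => //= x s IH H; rewrite (negbTE (H x (or_introl erefl))).
by apply: IH => y Hy; apply: H; right.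
Qed.

Lemma filter_allT (T : Type) (a : pred T) s :
  (forall x, List.In x s -> a x) -> filter a s = s.
Proof.
elim: s => //= x s IH H; rewrite (H x (or_introl erefl)) IH //.
by move=> y Hy; apply: H; right.
Qed.


Section Lists.
Context {d : Order.disp_t} {S : orderType d} {E : Type}.
Implicit Types (Phi : @profile d S E).

Lemma In_soc Phi j e : List.In (j, e) Phi -> j \in society Phi.
Proof. elim: Phi => //= p s IH [->|H]; rewrite inE ?eqxx //=; by rewrite IH ?orbT. Qed.

Lemma soc_In Phi j : j \in society Phi -> exists e, List.In (j, e) Phi.
Proof.
elim: Phi => //= -[i e] s IH; rewrite inE => /orP[/eqP ->|/IH [e' H]].
  by exists e; left.
by exists e'; right.
Qed.

Lemma valid_single (i : S) (e : E) : valid_profile (single i e).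
Proof. by split. Qed.

Lemma valid_uniq Phi j e1 e2 : valid_profile Phi -> List.In (j, e1) Phi ->
  List.In (j, e2) Phi -> e1 = e2.
Proof.
case=> _; elim: Phi => //= p s IH Hp.
have Hs := path_sorted Hp.
have Hall : all (fun q : S * E => (p.1 < q.1)%O) s.
  apply: order_path_min Hp => x y z; exact: lt_trans.
case=> [Hp1|H1] [Hp2|H2].
- by rewrite Hp1 in Hp2; case: Hp2.
- have := all_In Hall H2; by rewrite Hp1 /= ltxx.
- have := all_In Hall H1; by rewrite Hp2 /= ltxx.
- exact: IH.
Qed.

Definition prof (N : seq S) (f : S -> E) : profile := map (fun i => (i, f i)) N.

Lemma prof_valid N f : valid_society N -> valid_profile (prof N f).
Proof.
case=> H1 H2; split; first by case: N H1 H2.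
by rewrite /prof sorted_map.
Qed.

Lemma prof_soc N f : society (prof N f) = N.
Proof. by elim: N => //= i N ->. Qed.

Lemma prof_In N f j e : List.In (j, e) (prof N f) -> j \in N /\ e = f j.
Proof.
elim: N => //= i N IH [[-> ->]|/IH [H ->]]; first by rewrite inE eqxx.
by rewrite inE H orbT.
Qed.

Lemma choose_fun (e0 : E) (Q : S -> E -> Prop) (N : seq S) :
  (forall i, i \in N -> exists e, Q i e) -> exists f : S -> E, forall i, i \in N -> Q i (f i).
Proof.
elim: N => [|i N IH] H; first by exists (fun _ => e0).
have [e He] := H i (mem_head _ _).
have [f Hf] : exists f : S -> E, forall j, j \in N -> Q j (f j).
  by apply: IH => j Hj; apply: H; rewrite inE Hj orbT.
exists (fun j => if j == i then e else f j) => j; rewrite inE.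
by case: eqP => [->|_] //= /Hf.
Qed.
End Lists.

Section Main.
Variables (P : finType) (E : Type) (B : E -> form P).
Variables (d : Order.disp_t) (S : orderType d) (nabla : @profile d S E -> E -> E).
Variable (e0 : E).
Hypothesis Bcons : forall e, consistent (B e).
Hypothesis Bsurj : forall phi : form P, consistent phi -> exists e, fequiv (B e) phi.
Hypotheses (h1 : ESF1 B nabla) (h2 : ESF2 B nabla) (h3 : ESF3 B nabla) (h4 : ESF4 B nabla)
  (h7 : ESF7 B nabla) (h8 : ESF8W B nabla) (hSD : ESF_SD B nabla) (hI : ESF_I B nabla).
Hypothesis hthree : forall a b : interp P, exists c, (c != a) && (c != b).

Implicit Types (Phi : @profile d S E) (M T : {set interp P}) (a b c x y z v w : interp P).

Lemma eS_ex (M : {set interp P}) : exists e, M != set0 -> ms (B e) = M.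
Proof.
case: (boolP (M != set0)) => hM; last by exists e0.
have Hc : consistent (fchi M) by apply/ms_cons; rewrite ms_fchi.
have [e /ms_fequiv he] := Bsurj Hc.
by exists e => _; rewrite he ms_fchi.
Qed.
Definition eS M : E := proj1_sig (constructive_indefinite_description _ (eS_ex M)).
Lemma eSP M : M != set0 -> ms (B (eS M)) = M.
Proof. rewrite /eS; case: constructive_indefinite_description => e /= H; exact: H. Qed.

Definition out Phi M := ms (B (nabla Phi (eS M))).

Lemma msB_n0 e : ms (B e) != set0.
Proof. exact/ms_cons. Qed.

Lemma out_inv Phi e : valid_profile Phi -> out Phi (ms (B e)) = ms (B (nabla Phi e)).
Proof.
move=> HP; apply/ms_fequiv; apply: h2 => //.
by apply/ms_fequiv; rewrite eSP // msB_n0.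
Qed.

Lemma out_sub Phi M : valid_profile Phi -> M != set0 -> out Phi M \subset M.
Proof. by move=> HP HM; rewrite -{2}(eSP HM); apply/ms_ent/h1. Qed.

Lemma out_n0 Phi M : out Phi M != set0.
Proof. exact: msB_n0. Qed.

Lemma out_choice Phi M T : valid_profile Phi -> T \subset M -> T != set0 ->
  out Phi M :&: T != set0 -> out Phi T = out Phi M :&: T.
Proof.
move=> HP HTM HT HI.
have HM : M != set0.
  by case/set0Pn: HT => x Hx; apply/set0Pn; exists x; apply: (subsetP HTM).
have Heq : fequiv (B (eS T)) (FAnd (B (eS M)) (B (eS T))).
  by apply/ms_fequiv; rewrite ms_and !eSP //; apply/esym/setIidPr.
have H3 := h3 HP Heq; have := h4 HP Heq.
rewrite !ms_ent !ms_and !eSP // in H3 * => H4.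
have /H4 {}H4 : consistent (FAnd (B (nabla Phi (eS M))) (B (eS T))).
  by apply/ms_cons; rewrite ms_and eSP.
by apply/eqP; rewrite eqEsubset H3 H4.
Qed.

Definition po Phi (a b : interp P) := out Phi [set a; b].

Lemma set2_n0 (a b : interp P) : [set a; b] != set0.
Proof. by apply/set0Pn; exists a; rewrite set21. Qed.

Hint Resolve set2_n0 : core.
Hint Resolve valid_single : core.

Lemma po_sym Phi a b : po Phi a b = po Phi b a.
Proof. by rewrite /po setUC. Qed.

Lemma po_sub Phi a b v : valid_profile Phi -> v \in po Phi a b -> (v == a) || (v == b).
Proof.
move=> HP Hv; have := subsetP (out_sub HP (set2_n0 a b)) v Hv.
by rewrite !inE.
Qed.

Lemma po_eq Phi Phi' a b : valid_profile Phi -> valid_profile Phi' ->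
  (a \in po Phi a b) = (a \in po Phi' a b) -> (b \in po Phi a b) = (b \in po Phi' a b) ->
  po Phi a b = po Phi' a b.
Proof.
move=> HP HP' Ha Hb; apply/setP => v.
case: (boolP ((v == a) || (v == b))) => [/orP[]/eqP->//|Hv].
case: (boolP (v \in po Phi a b)) => [/(po_sub HP)|_]; first by rewrite (negbTE Hv).
case: (boolP (v \in po Phi' a b)) => [/(po_sub HP')|//]; by rewrite (negbTE Hv).
Qed.

Lemma po_nb Phi a b : valid_profile Phi -> b \notin po Phi a b -> a \in po Phi a b.
Proof.
move=> HP Hb; case/set0Pn: (out_n0 Phi [set a; b]) => v Hv.
by case/orP: (po_sub HP Hv) => /eqP Hva; subst v => //; rewrite Hv in Hb.
Qed.

Lemma po_strict Phi a b : valid_profile Phi -> a != b -> b \notin po Phi a b -> po Phi a b = [set a].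
Proof.
move=> HP Hab Hb; apply/setP => v; rewrite in_set1.
case: (boolP (v == a)) => [/eqP->|Hva]; first exact: po_nb.
case: (boolP (v \in po Phi a b)) => Hv //.
move: (po_sub HP Hv); rewrite (negbTE Hva) /= => /eqP Hvb.
by move: Hv; rewrite Hvb (negbTE Hb).
Qed.

Lemma po_cases Phi a b : valid_profile Phi -> a != b ->
  [\/ po Phi a b = [set a], po Phi a b = [set b] | po Phi a b = [set a; b]].
Proof.
move=> HP Hab.
case: (boolP (b \in po Phi a b)) => Hb; last by constructor 1; exact: po_strict.
case: (boolP (a \in po Phi a b)) => Ha.
  constructor 3; apply/setP => v; rewrite in_set2.
  case: (boolP (v \in po Phi a b)) => Hv; first by rewrite (po_sub HP Hv).
  by apply/esym/negbTE; apply: contra Hv => /orP[]/eqP->.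
constructor 2; rewrite po_sym; apply: po_strict => //; first by rewrite eq_sym.
by rewrite po_sym.
Qed.

Lemma trans_ws Phi x y z : valid_profile Phi -> x != y -> y != z -> x != z ->
  x \in po Phi x y -> z \notin po Phi y z -> z \notin po Phi x z.
Proof.
move=> HP Hxy Hyz Hxz Hx Hz.
set T := [set x; y; z].
have Tn0 : T != set0 by apply/set0Pn; exists x; rewrite !inE eqxx.
set C := out Phi T.
have CT := out_sub HP Tn0.
have sub_yz : [set y; z] \subset T by apply/subsetP => v; rewrite !inE => /orP[]->; rewrite ?orbT.
have sub_xy : [set x; y] \subset T by apply/subsetP => v; rewrite !inE => /orP[]->; rewrite ?orbT.
have sub_xz : [set x; z] \subset T by apply/subsetP => v; rewrite !inE => /orP[]->; rewrite ?orbT.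
have zC : z \notin C.
  apply/negP => zC; move: Hz.
  rewrite /po (@out_choice Phi T) //; first by rewrite in_setI zC !inE eqxx orbT.
  by apply/set0Pn; exists z; rewrite in_setI zC !inE eqxx orbT.
have xC : x \in C.
  case: (boolP (y \in C)) => yC.
    move: Hx; rewrite /po (@out_choice Phi T) //; first by rewrite in_setI => /andP[].
    by apply/set0Pn; exists y; rewrite in_setI yC !inE eqxx orbT.
  case/set0Pn: (out_n0 Phi T) => c Hc.
  move: (subsetP CT c Hc); rewrite !inE => /orP[/orP[/eqP Hcx|/eqP Hcy]|/eqP Hcz].
  - by move: Hc; rewrite Hcx inE.
  - by rewrite -Hcy Hc in yC.
  - by rewrite -Hcz Hc in zC.
rewrite /po (@out_choice Phi T) //; first by rewrite in_setI (negbTE zC).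
by apply/set0Pn; exists x; rewrite in_setI xC !inE eqxx.
Qed.

Lemma trans_sw Phi x y z : valid_profile Phi -> x != y -> y != z -> x != z ->
  y \notin po Phi x y -> y \in po Phi y z -> z \notin po Phi x z.
Proof.
move=> HP Hxy Hyz Hxz Hy Hy'.
set T := [set x; y; z].
have Tn0 : T != set0 by apply/set0Pn; exists x; rewrite !inE eqxx.
set C := out Phi T.
have CT := out_sub HP Tn0.
have sub_yz : [set y; z] \subset T by apply/subsetP => v; rewrite !inE => /orP[]->; rewrite ?orbT.
have sub_xy : [set x; y] \subset T by apply/subsetP => v; rewrite !inE => /orP[]->; rewrite ?orbT.
have sub_xz : [set x; z] \subset T by apply/subsetP => v; rewrite !inE => /orP[]->; rewrite ?orbT.
have yC : y \notin C.
  apply/negP => yC; move: Hy.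
  rewrite /po (@out_choice Phi T) //; first by rewrite in_setI yC !inE eqxx orbT.
  by apply/set0Pn; exists y; rewrite in_setI yC !inE eqxx orbT.
have zC : z \notin C.
  apply/negP => zC; move: Hy'.
  rewrite /po (@out_choice Phi T) //; first by rewrite in_setI (negbTE yC).
  by apply/set0Pn; exists z; rewrite in_setI zC !inE eqxx orbT.
have xC : x \in C.
  case/set0Pn: (out_n0 Phi T) => c Hc.
  move: (subsetP CT c Hc); rewrite !inE => /orP[/orP[/eqP Hcx|/eqP Hcy]|/eqP Hcz].
  - by move: Hc; rewrite Hcx inE.
  - by rewrite -Hcy Hc in yC.
  - by rewrite -Hcz Hc in zC.
rewrite /po (@out_choice Phi T) //; first by rewrite in_setI (negbTE zC).
by apply/set0Pn; exists x; rewrite in_setI xC !inE eqxx.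
Qed.

Lemma set1_n0 a : [set a] != set0.
Proof. by apply/set0Pn; exists a; rewrite set11. Qed.

Lemma out_single Phi a : valid_profile Phi -> out Phi [set a] = [set a].
Proof.
move=> HP; have Hs := out_sub HP (set1_n0 a).
case/set0Pn: (out_n0 Phi [set a]) => c Hc.
have := subsetP Hs c Hc; rewrite in_set1 => /eqP Hca.
apply/setP => v; rewrite in_set1; apply/idP/idP => [Hv|/eqP->].
  by have := subsetP Hs v Hv; rewrite in_set1.
by rewrite Hca in Hc.
Qed.

Lemma sub2_cases M a b : M \subset [set a; b] -> M != set0 ->
  [\/ M = [set a], M = [set b] | M = [set a; b]].
Proof.
move=> HM Hn.
have Hv : forall v, v \in M -> (v == a) || (v == b) by move=> v /(subsetP HM); rewrite in_set2.
case: (boolP (a \in M)) => Ha; case: (boolP (b \in M)) => Hb.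
- constructor 3; apply/setP => v; rewrite in_set2; apply/idP/idP => [/Hv //|/orP[]/eqP->//].
- constructor 1; apply/setP => v; rewrite in_set1; apply/idP/idP => [Hm|/eqP->//].
  by case/orP: (Hv v Hm) => // /eqP Hvb; subst v; rewrite Hm in Hb.
- constructor 2; apply/setP => v; rewrite in_set1; apply/idP/idP => [Hm|/eqP->//].
  by case/orP: (Hv v Hm) => // /eqP Hva; subst v; rewrite Hm in Ha.
- case/set0Pn: Hn => v Hm; case/orP: (Hv v Hm) => /eqP Hva; subst v.
  + by rewrite Hm in Ha.
  + by rewrite Hm in Hb.
Qed.

Lemma iia Phi Phi' a b : valid_profile Phi -> valid_profile Phi' -> society Phi = society Phi' ->
  (forall j e e', List.In (j,e) Phi -> List.In (j,e') Phi' ->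
     po (single j e) a b = po (single j e') a b) ->
  po Phi a b = po Phi' a b.
Proof.
move=> HP HP' Hs H; apply/ms_fequiv; apply: hI => // e' He' j ej ej' Hj Hj'.
apply/ms_fequiv; rewrite -!out_inv ?valid_single //.
have HM : ms (B e') \subset [set a; b].
  by rewrite -(eSP (set2_n0 a b)); apply/ms_ent.
by case: (sub2_cases HM (msB_n0 e')) => ->; rewrite ?out_single ?valid_single //; apply: H.
Qed.

Lemma unan Phi a b : valid_profile Phi -> a != b ->
  (forall j e, List.In (j, e) Phi -> b \notin po (single j e) a b) -> b \notin po Phi a b.
Proof.
elim: Phi => [[]//|[j e] s IH] [_ Hp] Hab H.
case: s IH Hp H => [|q s] IH Hp H; first by apply: H; left.
set s' := q :: s in IH Hp H *.
have Hvs : valid_profile s' by split => //; exact: path_sorted Hp.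
clearbody s'.
have Hall : all (fun q : S * E => (j < q.1)%O) s'.
  by apply: (order_path_min _ Hp) => x y z; exact: lt_trans.
have Hj : j \notin society s'.
  apply/negP => /soc_In [e' He']; have := all_In Hall He'; by rewrite /= ltxx.
have R1 : restr ((j, e) :: s') [:: j] = single j e.
  rewrite /restr /= mem_seq1 eqxx filter_none // => x Hx.
  by rewrite mem_seq1 gt_eqF //; exact: (all_In Hall Hx).
have R2 : restr ((j, e) :: s') (society s') = s'.
  rewrite /restr /= (negbTE Hj) filter_allT // => x Hx.
  case: x Hx => i ei Hx; exact: In_soc Hx.
have Hpart : partition2 (society ((j, e) :: s')) [:: j] (society s').
  split => //.
  - by case: Hvs; case: (s').
  - by move=> x; rewrite mem_seq1 => /eqP->.
  - by move=> x; rewrite /= in_cons mem_seq1.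
have Hval : valid_profile ((j, e) :: s') by split.
have Hb1 : b \notin po (single j e) a b by apply: H; left.
have Hb2 : b \notin po s' a b by apply: IH => // i ei Hi; apply: H; right.
have H8 := @h8 _ _ _ (eS [set a; b]) Hval Hpart.
rewrite R1 R2 ms_ent ms_or in H8.
have /H8 Hsub : consistent (FAnd (B (nabla (single j e) (eS [set a; b]))) (B (nabla s' (eS [set a; b])))).
  apply/ms_cons; rewrite ms_and; apply/set0Pn; exists a.
  by rewrite in_setI (po_nb (valid_single _ _) Hb1) (po_nb Hvs Hb2).
apply/negP => Hb; have := subsetP Hsub b Hb.
by rewrite in_setU (negbTE Hb1) (negbTE Hb2).
Qed.

Lemma sd_pats i x y z : x != y -> y != z -> x != z ->
  [/\ exists e, po (single i e) x y = [set x; y] /\ po (single i e) y z = [set y; z],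
      exists e, po (single i e) x y = [set x; y] /\ po (single i e) y z = [set y],
      exists e, po (single i e) x y = [set x] /\ po (single i e) y z = [set y; z] &
      exists e, po (single i e) x y = [set x] /\ po (single i e) y z = [set y]].
Proof.
move=> Hxy Hyz Hxz.
have M1 : models_are (B (eS [set x; y])) [set x; y] by apply/ms_models/eSP.
have M2 : models_are (B (eS [set y; z])) [set y; z] by apply/ms_models/eSP.
case: (hSD i Hxy Hyz Hxz M1 M2) => [[e [A1 A2]] [e' [B1 B2]] [e'' [C1 C2]] [e3 [D1 D2]]].
split.
- by exists e; split; apply/ms_models.
- by exists e'; split; apply/ms_models.
- by exists e''; split; apply/ms_models.
- by exists e3; split; apply/ms_models.
Qed.

Lemma lin3 i x y z : x != y -> y != z -> x != z -> exists e,
  [/\ po (single i e) x y = [set x], po (single i e) y z = [set y] & po (single i e) x z = [set x]].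
Proof.
move=> Hxy Hyz Hxz; case: (sd_pats i Hxy Hyz Hxz) => _ _ _ [e [E1 E2]].
exists e; split => //; apply: po_strict => //.
apply: (trans_ws (valid_single _ _) Hxy Hyz Hxz); first by rewrite E1 set11.
by rewrite E2 in_set1 eq_sym.
Qed.

Lemma pat_sw i x y z : x != y -> y != z -> x != z -> exists e,
  [/\ po (single i e) x y = [set x], po (single i e) y z = [set y; z] & po (single i e) x z = [set x]].
Proof.
move=> Hxy Hyz Hxz; case: (sd_pats i Hxy Hyz Hxz) => _ _ [e [E1 E2]] _.
exists e; split => //; apply: po_strict => //.
apply: (trans_sw (valid_single _ _) Hxy Hyz Hxz); first by rewrite E1 in_set1 eq_sym.
by rewrite E2 set21.
Qed.

Lemma pat_ws i x y z : x != y -> y != z -> x != z -> exists e,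
  [/\ po (single i e) x y = [set x; y], po (single i e) y z = [set y] & po (single i e) x z = [set x]].
Proof.
move=> Hxy Hyz Hxz; case: (sd_pats i Hxy Hyz Hxz) => _ [e [E1 E2]] _ _.
exists e; split => //; apply: po_strict => //.
apply: (trans_ws (valid_single _ _) Hxy Hyz Hxz); first by rewrite E1 set21.
by rewrite E2 in_set1 eq_sym.
Qed.

Lemma eq_sym_ne (a b : interp P) : a != b -> b != a.
Proof. by rewrite eq_sym. Qed.

Ltac nin := apply/negP; rewrite in_set1 => /eqP Heq; subst;
  match goal with H : is_true (?x != ?x) |- _ => by rewrite eqxx in H end.

Lemma notin1 a b : a != b -> b \notin [set a].
Proof. by rewrite in_set1 eq_sym. Qed.

Section Arrow.
Variable N : seq S.
Hypothesis HN : valid_society N.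

Definition dec (G : seq S) a b := forall Phi, valid_profile Phi -> society Phi = N ->
  (forall j e, List.In (j, e) Phi -> j \in G -> b \notin po (single j e) a b) ->
  b \notin po Phi a b.
Definition adec (G : seq S) a b := forall Phi, valid_profile Phi -> society Phi = N ->
  (forall j e, List.In (j, e) Phi ->
     if j \in G then b \notin po (single j e) a b else a \notin po (single j e) a b) ->
  b \notin po Phi a b.

Lemma dec_adec G a b : dec G a b -> adec G a b.
Proof.
move=> H Phi HP Hs HG; apply: H => // j e Hj jG.
by have := HG j e Hj; rewrite jG.
Qed.

Lemma construct (Q : S -> E -> Prop) : (forall i, i \in N -> exists e, Q i e) ->
  exists Phi', [/\ valid_profile Phi', society Phi' = N &
                   forall j e, List.In (j, e) Phi' -> Q j e].
Proof.
move=> H; have [f Hf] := choose_fun e0 H.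
exists (prof N f); split; [exact: prof_valid | exact: prof_soc |].
by move=> j e Hje; have [Hj ->] := prof_In Hje; apply: Hf.
Qed.

Lemma entry Phi i : society Phi = N -> i \in N -> exists e, List.In (i, e) Phi.
Proof. by move=> Hs Hi; apply: soc_In; rewrite Hs. Qed.

Lemma exp1 G a b c : a != b -> b != c -> a != c -> adec G a b -> dec G a c.
Proof.
move=> Hab Hbc Hac Had Phi HP Hs HG.
pose Q j e' := exists2 e, List.In (j, e) Phi &
  [/\ po (single j e') a c = po (single j e) a c,
      (if j \in G then b \notin po (single j e') a b else a \notin po (single j e') a b) &
      c \notin po (single j e') b c].
have [|Phi' [HP' Hs' HQ]] := @construct Q.
  move=> i Hi; have [e He] := entry Hs Hi.
  case: (boolP (i \in G)) => iG.
  - have Hc := HG i e He iG.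
    have [e' [E1 E2 E3]] := lin3 i Hab Hbc Hac.
    exists e'; exists e => //; split.
    + by rewrite E3 (po_strict (valid_single _ _) Hac Hc).
    + rewrite iG E1; nin.
    + rewrite E2; nin.
  - case: (po_cases (valid_single i e) Hac) => Hpo.
    + have [e' [E1 E2 E3]] := lin3 i (eq_sym_ne Hab) Hac (Hbc).
            exists e'; exists e => //; split.
      * by rewrite E2 Hpo.
      * rewrite (negbTE iG) po_sym E1; nin.
      * rewrite E3; nin.
    + have [e' [E1 E2 E3]] := lin3 i Hbc (eq_sym_ne Hac) (eq_sym_ne Hab).
      exists e'; exists e => //; split.
      * by rewrite po_sym E2 Hpo.
      * rewrite (negbTE iG) po_sym E3; nin.
      * rewrite E1; nin.
    + have [e' [E1 E2 E3]] := pat_sw i (eq_sym_ne Hab) Hac Hbc.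
      exists e'; exists e => //; split.
      * by rewrite E2 Hpo.
      * rewrite (negbTE iG) po_sym E1; nin.
      * rewrite E3; nin.
have Hb' : b \notin po Phi' a b.
  apply: Had => // j e' Hj; by have [e _ [_ H1 _]] := HQ j e' Hj.
have Hc' : c \notin po Phi' b c.
  by apply: unan => // j e' Hj; have [e _ [_ _ H2]] := HQ j e' Hj.
have Hc'' := trans_ws HP' Hab Hbc Hac (po_nb HP' Hb') Hc'.
have -> : po Phi a c = po Phi' a c.
  apply: iia => //; first by rewrite Hs Hs'.
  move=> j e e' Hj Hj'; have [e2 He2 [H0 _ _]] := HQ j e' Hj'.
  by rewrite H0 (valid_uniq HP Hj He2).
exact: Hc''.
Qed.

Lemma exp2 G a b c : a != b -> b != c -> a != c -> adec G a b -> dec G c b.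
Proof.
move=> Hab Hbc Hac Had Phi HP Hs HG.
have Hca : c != a by rewrite eq_sym.
have Hcb : c != b by rewrite eq_sym.
have Hba : b != a by rewrite eq_sym.
pose Q j e' := exists2 e, List.In (j, e) Phi &
  [/\ po (single j e') c b = po (single j e) c b,
      a \notin po (single j e') c a &
      (if j \in G then b \notin po (single j e') a b else a \notin po (single j e') a b)].
have [|Phi' [HP' Hs' HQ]] := @construct Q.
  move=> i Hi; have [e He] := entry Hs Hi.
  case: (boolP (i \in G)) => iG.
  - have Hc := HG i e He iG.
    have [e' [E1 E2 E3]] := lin3 i Hca Hab Hcb.
    exists e'; exists e => //; split.
    + by rewrite E3 (po_strict (valid_single _ _) Hcb Hc).
    + rewrite E1; nin.
    + rewrite iG E2; nin.
  - case: (po_cases (valid_single i e) Hcb) => Hpo.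
    + have [e' [E1 E2 E3]] := lin3 i Hcb Hba Hca.
      exists e'; exists e => //; split.
      * by rewrite E1 Hpo.
      * rewrite E3; nin.
      * rewrite (negbTE iG) po_sym E2; nin.
    + have [e' [E1 E2 E3]] := lin3 i Hbc Hca Hba.
      exists e'; exists e => //; split.
      * by rewrite po_sym E1 Hpo.
      * rewrite E2; nin.
      * rewrite (negbTE iG) po_sym E3; nin.
    + have [e' [E1 E2 E3]] := pat_ws i Hcb Hba Hca.
      exists e'; exists e => //; split.
      * by rewrite E1 Hpo.
      * rewrite E3; nin.
      * rewrite (negbTE iG) po_sym E2; nin.
have Ha' : a \notin po Phi' c a.
  by apply: unan => // j e' Hj; have [e _ [_ H2 _]] := HQ j e' Hj.
have Hb' : b \notin po Phi' a b.
  apply: Had => // j e' Hj; by have [e _ [_ _ H1]] := HQ j e' Hj.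
have Hb'' := trans_ws HP' Hca Hab Hcb (po_nb HP' Ha') Hb'.
have -> : po Phi c b = po Phi' c b.
  apply: iia => //; first by rewrite Hs Hs'.
  move=> j e e' Hj Hj'; have [e2 He2 [H0 _ _]] := HQ j e' Hj'.
  by rewrite H0 (valid_uniq HP Hj He2).
exact: Hb''.
Qed.

Lemma adec_all G x y : x != y -> adec G x y -> forall u v, u != v -> dec G u v.
Proof.
move=> Hxy H.
have Hx : forall v, v != x -> dec G x v.
  move=> v Hvx; case: (boolP (v == y)) => [/eqP->|Hvy].
  - have [c /andP[Hcx Hcy]] := hthree x y.
    have Hxc : dec G x c := exp1 Hxy (eq_sym_ne Hcy) (eq_sym_ne Hcx) H.
    exact: exp1 (eq_sym_ne Hcx) Hcy Hxy (dec_adec Hxc).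
  - exact: exp1 Hxy (eq_sym_ne Hvy) (eq_sym_ne Hvx) H.
move=> u v Huv; case: (boolP (u == x)) => [/eqP Hux|Hux].
  by subst u; apply: Hx; rewrite eq_sym.
case: (boolP (v == x)) => [/eqP Hvx|Hvx].
- subst v; have [w /andP[Hwu Hwx]] := hthree u x.
  have Hxw : dec G x w by apply: Hx.
  have Huw : dec G u w := exp2 (eq_sym_ne Hwx) Hwu (eq_sym_ne Hux) (dec_adec Hxw).
  exact: exp1 (eq_sym_ne Hwu) Hwx Hux (dec_adec Huw).
- exact: exp2 (eq_sym_ne Hvx) (eq_sym_ne Huv) (eq_sym_ne Hux) (dec_adec (Hx v Hvx)).
Qed.

Lemma contract g G' : g \notin G' -> (forall a b, a != b -> dec (g :: G') a b) ->
  (exists a b, a != b /\ adec [:: g] a b) \/ (exists a b, a != b /\ adec G' a b).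
Proof.
move=> HgG Hdec.
pose x : interp P := [ffun => true].
have [y /andP[Hyx _]] := hthree x x.
have [z /andP[Hzx Hzy]] := hthree x y.
have Hxy := eq_sym_ne Hyx; have Hxz := eq_sym_ne Hzx; have Hyz := eq_sym_ne Hzy.
pose Q j e' := if j == g then [/\ y \notin po (single j e') x y, z \notin po (single j e') y z
                                 & z \notin po (single j e') x z]
  else if j \in G' then [/\ x \notin po (single j e') z x, y \notin po (single j e') x y
                          & y \notin po (single j e') z y]
  else [/\ z \notin po (single j e') y z, x \notin po (single j e') z x
         & x \notin po (single j e') y x].
have [|Phi' [HP' Hs' HQ]] := @construct Q.
  move=> i Hi; rewrite /Q.
  case: (i == g).
    have [e' [E1 E2 E3]] := lin3 i Hxy Hyz Hxz.
    by exists e'; rewrite E1 E2 E3; split; nin.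
  case: (i \in G').
    have [e' [E1 E2 E3]] := lin3 i Hzx Hxy Hzy.
    by exists e'; rewrite E1 E2 E3; split; nin.
  have [e' [E1 E2 E3]] := lin3 i Hyz Hzx Hyx.
  by exists e'; rewrite E1 E2 E3; split; nin.
have Hy' : y \notin po Phi' x y.
  apply: (Hdec x y Hxy) => // j e Hj; rewrite inE; have := HQ j e Hj; rewrite /Q.
  by case: (j == g) => [[]|]; case: (j \in G') => //= -[].
case: (boolP (z \in po Phi' x z)) => Hz.
- right; exists z, y; split => // Psi HPs Hss H.
  have -> : po Psi z y = po Phi' z y.
    apply: iia => //; first by rewrite Hss Hs'.
    move=> j e e' Hj Hj'; have := H j e Hj; have := HQ j e' Hj'; rewrite /Q.
    case: (boolP (j == g)) => [/eqP Hjg|_].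
      subst j; rewrite (negbTE HgG) => -[_ H2 _] H3.
      by rewrite (po_sym _ z y) in H3; rewrite (po_sym (single _ e) z y) (po_sym (single _ e') z y) (po_strict (valid_single _ _) Hyz H3) (po_strict (valid_single _ _) Hyz H2).
    case: (j \in G') => [[_ _ H2] H3|[H2 _ _] H3].
      by rewrite (po_strict (valid_single _ _) Hzy H3) (po_strict (valid_single _ _) Hzy H2).
    by rewrite (po_sym _ z y) in H3; rewrite (po_sym (single _ e) z y) (po_sym (single _ e') z y) (po_strict (valid_single _ _) Hyz H3) (po_strict (valid_single _ _) Hyz H2).
  apply: (trans_ws HP' Hzx Hxy Hzy) => //; by rewrite po_sym.
- left; exists x, z; split => // Psi HPs Hss H.
  have -> : po Psi x z = po Phi' x z.
    apply: iia => //; first by rewrite Hss Hs'.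
    move=> j e e' Hj Hj'; have := H j e Hj; have := HQ j e' Hj'; rewrite /Q mem_seq1.
    case: (boolP (j == g)) => [_ [_ _ H2] H3|_].
      by rewrite (po_strict (valid_single _ _) Hxz H3) (po_strict (valid_single _ _) Hxz H2).
    case: (j \in G') => [[H2 _ _] H3|[_ H2 _] H3].
      by rewrite (po_sym _ x z) in H3; rewrite (po_sym (single _ e) x z) (po_sym (single _ e') x z) (po_strict (valid_single _ _) Hzx H3) (po_strict (valid_single _ _) Hzx H2).
    by rewrite (po_sym _ x z) in H3; rewrite (po_sym (single _ e) x z) (po_sym (single _ e') x z) (po_strict (valid_single _ _) Hzx H3) (po_strict (valid_single _ _) Hzx H2).
  by [].
Qed.

Lemma single_dec G : uniq G -> G != [::] -> (forall a b, a != b -> dec G a b) ->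
  exists2 dd, dd \in G & (forall a b, a != b -> dec [:: dd] a b).
Proof.
elim: G => [//|g G' IH] /= /andP[HgG HuG] _ Hdec.
case HG' : (G' == [::]).
  by move/eqP: HG' => HG'; subst G'; exists g; rewrite ?mem_head.
case: (contract HgG Hdec) => [[a [b [Hab Had]]]|[a [b [Hab Had]]]].
- by exists g; [exact: mem_head | exact: adec_all Hab Had].
- have [dd Hdd Hd] := IH HuG (negbT HG') (adec_all Hab Had).
  by exists dd => //; rewrite inE Hdd orbT.
Qed.

Lemma dictator : exists2 dd, dd \in N & forall Phi e, valid_profile Phi -> society Phi = N ->
  forall edN, List.In (dd, edN) Phi -> ent (B (nabla Phi e)) (B (nabla (single dd edN) e)).
Proof.
have HuN : uniq N by case: HN => _ Hs; exact: sorted_uniq lt_trans ltxx _ Hs.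
have HdN : forall a b, a != b -> dec N a b.
  move=> a b Hab Phi HP Hs HG; apply: (unan HP Hab) => j e Hj; apply: (HG _ _ Hj).
  by rewrite -Hs; exact: In_soc Hj.
have HN0 : N != [::] by case: HN => H _; apply/eqP.
have [dd Hdd Hd] := single_dec HuN HN0 HdN.
exists dd => // Phi e HP Hs edN Hin v Hv.
case Hv2: (eval v (B (nabla (single dd edN) e))) => //.
exfalso.
set T := ms (B e).
have [y Hy] := Bcons (nabla (single dd edN) e).
have yS : y \in out (single dd edN) T by rewrite out_inv // inE.
have xS : v \in out Phi T by rewrite out_inv // inE.
have Hvy : v != y by apply/eqP => Hvy; rewrite Hvy Hy in Hv2.
have HT : [set y; v] \subset T.
  apply/subsetP => w; rewrite in_set2 => /orP[]/eqP->.
  - exact: (subsetP (out_sub (valid_single _ _) (msB_n0 e)) _ yS).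
  - exact: (subsetP (out_sub HP (msB_n0 e)) _ xS).
have E1 : po (single dd edN) y v = out (single dd edN) T :&: [set y; v].
  apply: out_choice => //; apply/set0Pn; exists y; by rewrite in_setI yS set21.
have E2 : po Phi y v = out Phi T :&: [set y; v].
  apply: out_choice => //; apply/set0Pn; exists v; by rewrite in_setI xS in_set2 eqxx orbT.
have : v \notin po Phi y v.
  apply: (Hd y v (eq_sym_ne Hvy)) => // j ej Hj; rewrite mem_seq1 => /eqP Hjd; subst j.
  by rewrite (valid_uniq HP Hj Hin) E1 in_setI out_inv // inE Hv2.
by rewrite E2 in_setI xS in_set2 eqxx orbT.
Qed.

End Arrow.
End Main.

Lemma three_interp (P : finType) (hP : 1 < #|P|) (a b : interp P) : exists c : interp P, (c != a) && (c != b).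
Proof.
have : ~~ ([set: interp P] \subset [set a; b]).
  apply/negP => /subset_leq_card; rewrite cardsT card_ffun card_bool cards2.
  have H4 : 2 ^ 2 <= 2 ^ #|P| by apply: leq_pexp2l.
  move=> H; have := leq_trans H4 H; by case: (a != b).
case/subsetPn => c _; rewrite !inE negb_or => Hc; by exists c.
Qed.

Theorem corollary1 (P : finType) (hP : 1 < #|P|)
  (E : Type) (B : E -> form P) (hES : epistemic_space B)
  (d : Order.disp_t) (S : orderType d)
  (hS : well_founded (fun x y : S => (x < y)%O))
  (nabla : @profile d S E -> E -> E)
  (hbasic : basic_fusion B nabla)
  (hSD : ESF_SD B nabla) (h7 : ESF7 B nabla) (h8 : ESF8W B nabla)
  (hI : ESF_I B nabla) :
  ESF_D B nabla.
Proof.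
case: hES => [[e0] Bcons Bsurj].
case: hbasic => h1 h2 h3 h4.
move=> N HN.
exact: (dictator e0 Bcons Bsurj h1 h2 h3 h4 h8 hSD hI (three_interp hP) HN).
Qed.
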